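(* Let $\alpha=(\alpha_1,\dots,\alpha_k)\in\mathbb N^k$ with $k\ge1$ and $\alpha_k>0$. Then for every $\beta\in\mathbb P^k$, $$Z\tbinom{\alpha}{\beta}=M_\alpha=\sum_{0<i_1<\cdots<i_k}x_{i_1}^{\alpha_1}\cdots x_{i_k}^{\alpha_k}.$$ In particular, $Z\binom{\alpha}{\beta}$ is independent of $\beta$.
   Context: $\mathbb P$ denotes the positive and $\mathbb N$ the nonnegative integers. Let $X=\{x_i:i\in\mathbb P\}$ be commuting indeterminates. GSym. $\mathrm{GSym}\subseteq\mathbb Q[[X]]$ is the $\mathbb Q$-span of the series $\widehat M_{\binom{\gamma}{\mu}}=\sum_{0<i_1<\cdots<i_m}i_1^{\mu_1}\cdots i_m^{\mu_m}x_{i_1}^{\gamma_1}\cdots x_{i_m}^{\gamma_m}$, for $\gamma\in\mathbb N^m$ with $m=0$ or $\gamma_m>0$, and $\mu\in\mathbb N^m$. Regularization. For $\alpha\in\mathbb N^k$ and $\beta\in\mathbb P^k$, $\phi\binom{\alpha}{\beta}\in\mathrm{GSym}[t][z^{-1},z]]$ is obtained from $$\sum_{0<i_1<\cdots<i_k}x_{i_1}^{\alpha_1}\cdots x_{i_k}^{\alpha_k}e^{(i_1+t)\beta_1z}\cdots e^{(i_k+t)\beta_kz}$$ as follows. The coefficient of each $X$-monomial converges absolutely for $t\ge0$, $\mathrm{Re}(z)<0$. It is expanded as a Laurent series in $z$ with coefficients in $\mathbb Q[t]$, and powers of $z,t$ are collected. Renormalization. Let $P$ be the projection onto the polar part in $z$,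 $P(\sum_{n\ge m}a_nz^n)=\sum_{n<0}a_nz^n$. For $k\ge1$ define recursively $$\phi_-\tbinom{\alpha}{\beta}=-P\Big(\phi\tbinom{\alpha}{\beta}+\sum_{i=1}^{k-1}\phi\tbinom{\alpha_1..\alpha_i}{\beta_1..\beta_i}\phi_-\tbinom{\alpha_{i+1}..\alpha_k}{\beta_{i+1}..\beta_k}\Big),$$ $$\phi_+\tbinom{\alpha}{\beta}=(\mathrm{id}-P)\Big(\phi\tbinom{\alpha}{\beta}+\sum_{i=1}^{k-1}\phi\tbinom{\alpha_1..\alpha_i}{\beta_1..\beta_i}\phi_-\tbinom{\alpha_{i+1}..\alpha_k}{\beta_{i+1}..\beta_k}\Big).$$ Then $Z\binom{\alpha}{\beta}:=\phi_+\binom{\alpha}{\beta}\big|_{z=0}\in\mathrm{GSym}[t]$. *)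

(* Defs.v *)
From HB Require Import structures.
From mathcomp Require Import all_boot all_order all_algebra.
From mathcomp Require Import all_classical all_reals all_analysis.
Set Implicit Arguments.
Unset Strict Implicit.
Unset Printing Implicit Defensive.
Import Order.TTheory GRing.Theory Num.Theory.
Import numFieldNormedType.Exports.
Local Open Scope classical_set_scope.
Local Open Scope ring_scope.

(* Monomials in X = {x_1, x_2, ...}: a monomial is a seq of exponents  *)
(* m = [:: e_1; e_2; ...; e_n] standing for x_1^e_1 ... x_n^e_n.       *)
(* Two seqs denote the same monomial iff they agree up to trailing 0s. *)

Definition eqm (m1 m2 : seq nat) : bool :=
  all (fun i => nth 0%N m1 i == nth 0%N m2 i) (iota 0 (maxn (size m1) (size m2))).

(* the monomial x_{I_1}^{a_1} ... x_{I_k}^{a_k} of an index tuple I *)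
Definition tup_mono (alpha I : seq nat) : seq nat :=
  [seq (\sum_(j < size alpha) (nth 0%N I j == i) * nth 0%N alpha j)%N
  | i <- iota 1 (foldr maxn 0%N I)].

Definition valid (alpha : seq nat) (m : seq nat) (I : seq nat) : bool :=
  [&& size I == size alpha, sorted ltn (0%N :: I) & eqm (tup_mono alpha I) m].

(* Elements of Q[[X]][t]((z)) with bounded-below z-order:              *)
(* Laurent N c  stands for  sum_m sum_{j>=0} c m j z^(j-N) x^m,        *)
(* where c m j : {poly rat} is a polynomial in t.                      *)

Record laurent := Laurent { lval : nat ; lcoef : seq nat -> nat -> {poly rat} }.

Definition lzero : laurent := Laurent 0 (fun _ _ => 0).

Definition lshift (L : laurent) (N : nat) : seq nat -> nat -> {poly rat} :=
  (* the coefficients of L re-indexed with valuation bound N >= lval L *)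
  fun m j => if (N - lval L <= j)%N then lcoef L m (j - (N - lval L)) else 0.

Definition ladd (L1 L2 : laurent) : laurent :=
  let N := maxn (lval L1) (lval L2) in
  Laurent N (fun m j => lshift L1 N m j + lshift L2 N m j).

Definition lopp (L : laurent) : laurent := Laurent (lval L) (fun m j => - lcoef L m j).

Fixpoint decomp (m : seq nat) : seq (seq nat * seq nat) :=
  match m with
  | [::] => [:: ([::], [::])]
  | e :: m' => [seq (a :: p.1, (e - a)%N :: p.2) | a <- iota 0 e.+1, p <- decomp m']
  end.

Definition lmul (L1 L2 : laurent) : laurent :=
  Laurent (lval L1 + lval L2)
    (fun m j => \sum_(p <- decomp m) \sum_(j1 < j.+1) lcoef L1 p.1 j1 * lcoef L2 p.2 (j - j1)).

Definition lpolar (L : laurent) : laurent :=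
  Laurent (lval L) (fun m j => if (j < lval L)%N then lcoef L m j else 0).

Definition lreg (L : laurent) : laurent :=
  Laurent (lval L) (fun m j => if (lval L <= j)%N then lcoef L m j else 0).

Section Reg.
Variable R : realType.

(* coefficient of x^m in sum_{0<i_1<..<i_k} x_{i_1}^{a_1}..x_{i_k}^{a_k}
   e^{(i_1+t) b_1 z} ... e^{(i_k+t) b_k z}, for real t and z *)
Definition Fcoef (alpha beta m : seq nat) (t z : R) : \bar R :=
  (\esum_(I in [set I | valid alpha m I])
     (expR (z * \sum_(j < size alpha) ((nth 0%N I j)%:R + t) * (nth 0%N beta j)%:R))%:E)%E.

(* L is the Laurent expansion in z (coefficients in Q[t]) of every
   X-coefficient, valid for t >= 0 and z < 0 near 0 *)
Definition is_expansion (alpha beta : seq nat) (L : laurent) : Prop :=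
  forall (m : seq nat) (t : R), 0 <= t ->
    exists2 r : R, 0 < r & forall z : R, - r < z < 0 ->
      exists l : R,
        (series (fun j : nat => (map_poly ratr (lcoef L m j)).[t]
                               * z ^ (j%:Z - (lval L)%:Z)) @ \oo --> l)
        /\ Fcoef alpha beta m t z = l%:E.

Definition phi (alpha beta : seq nat) : laurent :=
  match pselect (exists L, is_expansion alpha beta L) with
  | left h => projT1 (cid h)
  | right _ => lzero
  end.

(* Renormalization: phi_- and phi_+ (recursion with fuel = length) *)
Fixpoint phim_f (n : nat) (alpha beta : seq nat) : laurent :=
  match n with
  | 0%N => lzero
  | n'.+1 =>
      lopp (lpolar (foldl ladd (phi alpha beta)
        [seq lmul (phi (take i alpha) (take i beta))
                  (phim_f n' (drop i alpha) (drop i beta))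
        | i <- iota 1 (size alpha).-1]))
  end.

Definition phim (alpha beta : seq nat) : laurent := phim_f (size alpha) alpha beta.

Definition phip (alpha beta : seq nat) : laurent :=
  lreg (foldl ladd (phi alpha beta)
        [seq lmul (phi (take i alpha) (take i beta)) (phim (drop i alpha) (drop i beta))
        | i <- iota 1 (size alpha).-1]).

(* Z(alpha; beta) = phi_+ |_{z=0}: coefficient of x^m is a polynomial in t *)
Definition Zcoef (alpha beta m : seq nat) : {poly rat} :=
  lcoef (phip alpha beta) m (lval (phip alpha beta)).

End Reg.

Fixpoint subs (s : seq nat) : seq (seq nat) :=
  match s with
  | [::] => [:: [::]]
  | x :: s' => [seq x :: u | u <- subs s'] ++ subs s'
  end.

(* Coefficient of x^m in M_alpha = sum_{0<i_1<..<i_k} x_{i_1}^{a_1}..x_{i_k}^{a_k}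
   (for alpha_k > 0: every such tuple has i_k <= size m, so the tuples range
   over the subsets of {1..size m}) *)
Definition Mcoef (alpha m : seq nat) : rat :=
  (count (valid alpha m) (subs (iota 1 (size m))))%:R.

(* Main.v *)
Require Import Defs.
From HB Require Import structures.
From mathcomp Require Import all_boot all_order all_algebra.
From mathcomp Require Import all_classical all_reals all_analysis.
From mathcomp Require Import zify ring lra.
Import Order.TTheory GRing.Theory Num.Theory.
Import numFieldNormedType.Exports.
Local Open Scope ring_scope.


Definition Zc (K : laurent) := forall m j, lcoef K m j = 0.
Definition Good (K : laurent) (v : seq nat -> {poly rat}) :=
  (forall m j, (j < lval K)%N -> lcoef K m j = 0) /\ (forall m, lcoef K m (lval K) = v m).

Lemma Zc_lmul K1 K2 : Zc K2 -> Zc (lmul K1 K2).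
Proof.
move=> h m j /=; apply: big1 => p _; apply: big1 => i _; by rewrite h mulr0.
Qed.

Lemma Zc_lzero : Zc lzero. Proof. by []. Qed.

Lemma lshift_Zc K N m j : Zc K -> Defs.lshift K N m j = 0.
Proof. by move=> z; rewrite /Defs.lshift; case: ifP. Qed.

Lemma Good_ladd K K2 v : Good K v -> Zc K2 -> Good (ladd K K2) v.
Proof.
move=> [h1 h2] z; split=> [m j /=|m /=]; rewrite (lshift_Zc _ _ _ _ z) addr0 /Defs.lshift.
  move=> hj; case: ifP => // hle; apply: h1.
  move: hj hle; rewrite /maxn; case: ifP => ?; lia.
by rewrite leq_subr subKn ?leq_maxl.
Qed.

Lemma Good_foldl (f : nat -> laurent) s K v : Good K v -> (forall i, i \in s -> Zc (f i)) ->
  Good (foldl ladd K (map f s)) v.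
Proof.
elim: s K => [|x s IH] K hK //= hs.
apply: IH; first by apply: Good_ladd => //; apply: hs; rewrite inE eqxx.
by move=> i hi; apply: hs; rewrite inE hi orbT.
Qed.

Lemma Zc_polar K v : Good K v -> Zc (lopp (lpolar K)).
Proof. by move=> [h1 _] m j /=; case: ifP => [/(h1 m j) ->|_]; rewrite oppr0. Qed.


Lemma last_drop (x : nat) i s : (i < size s)%N -> last x (drop i s) = last x s.
Proof.
move=> hi; rewrite -{2}(cat_take_drop i s) last_cat.
case E: (drop i s) => [|y r] //.
by move: (size_drop i s); rewrite E /=; lia.
Qed.

Section Assembly.
Variable R : realType.
Hypothesis phi_good : forall s b, (0 < size s)%N -> (0 < last 0%N s)%N ->
  Good (phi R s b) (fun m => (Mcoef s m)%:P).

Lemma phim_Zc n s b : (0 < size s)%N -> (0 < last 0%N s)%N -> Zc (phim_f R n s b).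
Proof.
elim: n s b => [|n IH] s b hs hl /=; first exact: Zc_lzero.
apply: (@Zc_polar _ (fun m => (Mcoef s m)%:P)).
apply: Good_foldl; first exact: phi_good.
move=> i; rewrite mem_iota => /andP[h1 h2].
have hi : (i < size s)%N by lia.
apply: Zc_lmul; apply: IH; first by rewrite size_drop; lia.
by rewrite last_drop.
Qed.

Lemma final s b m : (0 < size s)%N -> (0 < last 0%N s)%N ->
  Zcoef R s b m = (Mcoef s m)%:P.
Proof.
move=> hs hl; rewrite /Zcoef /phip /= leqnn.
have HZ : forall i, i \in iota 1 (size s).-1 -> Zc (lmul (phi R (take i s) (take i b))
   (phim R (drop i s) (drop i b))).
  move=> i; rewrite mem_iota => /andP[h1 h2].
  have hi : (i < size s)%N by lia.
  apply: Zc_lmul; apply: phim_Zc; first by rewrite size_drop; lia.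
  by rewrite last_drop.
exact: (proj2 (@Good_foldl _ _ _ _ (phi_good s b hs hl) HZ)).
Qed.
End Assembly.


Lemma subs_mem n lo (I : seq nat) : sorted ltn I -> all (fun x => lo <= x < lo + n)%N I ->
  I \in subs (iota lo n).
Proof.
elim: n lo I => [|n IH] lo I.
  by case: I => [|x I] //= _ /andP[]; lia.
move=> hs ha /=; rewrite mem_cat.
case: I hs ha => [|x I] hs ha.
  by rewrite orbC IH.
have hp : all (ltn x) I by apply: order_path_min hs; exact: ltn_trans.
move: ha => /= /andP[hx ha].
have [exl|nxl] := eqVneq x lo.
  apply/orP; left; subst x; apply: map_f; apply: IH; first exact: path_sorted hs.
  apply/allP => y hy; move/allP: ha => /(_ y hy); move/allP: hp => /(_ y hy) /=; lia.
apply/orP; right; apply: IH => //=; rewrite ?hs.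
apply/andP; split; first lia.
apply/allP => y hy; move/allP: ha => /(_ y hy); move/allP: hp => /(_ y hy) /=; lia.
Qed.

Lemma subs_ge n lo u : u \in subs (iota lo n) -> all (fun x => lo <= x)%N u.
Proof.
elim: n lo u => [|n IH] lo u /=; first by rewrite inE => /eqP ->.
rewrite mem_cat => /orP[/mapP[v hv ->]|hu] /=.
  by rewrite leqnn /=; apply/allP => y hy; move/allP: (IH _ _ hv) => /(_ y hy); lia.
by apply/allP => y hy; move/allP: (IH _ _ hu) => /(_ y hy); lia.
Qed.

Lemma subs_uniq n lo : uniq (subs (iota lo n)).
Proof.
elim: n lo => [|n IH] lo //=.
have inj : injective (cons lo) by move=> u v [].
rewrite cat_uniq IH andbT (map_inj_uniq inj) IH /=.
apply/hasPn => u hu; apply/mapP => -[v _ E]; subst u.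
by move: (subs_ge _ _ _ hu) => /= /andP[]; lia.
Qed.

Lemma path_le_last (a : nat) I : path ltn a I -> forall x, x \in a :: I -> (x <= last a I)%N.
Proof.
elim: I a => [|y I IH] a /=; first by move=> _ x; rewrite inE => /eqP ->.
move=> /andP[hay hp] x; rewrite inE => /orP[/eqP ->|hx]; last exact: IH.
have := IH y hp y (mem_head _ _); lia.
Qed.

Lemma le_foldr_max x (I : seq nat) : x \in I -> (x <= foldr maxn 0 I)%N.
Proof.
elim: I => [|y I IH] //=; rewrite inE => /orP[/eqP ->|/IH]; lia.
Qed.

Lemma valid_in s m I : (0 < size s)%N -> (0 < last 0%N s)%N -> valid s m I ->
  I \in subs (iota 1 (size m)).
Proof.
move=> hs hl /and3P[/eqP hsz hsort heq]; move: hsort => /= hsort.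
have hsI : sorted ltn I := path_sorted hsort.
set L := last 0%N I.
have hle : forall x, x \in I -> (x <= L)%N.
  by move=> x hx; apply: (path_le_last _ _ hsort x); rewrite inE hx orbT.
have hpos : all (ltn 0) I by apply: order_path_min hsort; exact: ltn_trans.
have [y [I' EI]] : exists y I', I = y :: I'.
  by clear -hsz hs; case: I hsz => [|y I'] hsz; [move: hs; rewrite -hsz | exists y, I'].
have hLI : L \in I by rewrite /L EI /= mem_last.
have hL0 : (0 < L)%N by move/allP: hpos => /(_ _ hLI).
have hLmax : (L <= foldr maxn 0 I)%N by apply: le_foldr_max.
have hLm : (L <= size m)%N.
  have hk : ((size s).-1 < size s)%N by lia.
  have hnthI : nth 0%N I (size s).-1 = L by rewrite /L -nth_last hsz.
  have htup : (0 < nth 0%N (tup_mono s I) L.-1)%N.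
    rewrite /tup_mono (nth_map 0%N); last by rewrite size_iota; lia.
    rewrite nth_iota; last by lia.
    rewrite (bigD1 (Ordinal hk)) //= add1n prednK // hnthI eqxx mul1n.
    rewrite -nth_last in hl; lia.
  move: heq; rewrite /eqm => /allP /(_ L.-1).
  rewrite mem_iota add0n size_map size_iota.
  have -> : (L.-1 < maxn (foldr maxn 0 I) (size m))%N by lia.
  move=> /(_ isT) /eqP E; rewrite E in htup.
  case: (leqP L (size m)) => // hh.
  by rewrite nth_default in htup; lia.
apply: (subs_mem (size m) 1 I hsI); apply/allP => x hx.
move/allP: hpos => /(_ x hx) /= h0; have := hle x hx; lia.
Qed.


Section Core.
Local Open Scope classical_set_scope.
Variable R : realType.

Lemma geom_bound (q : R) n : 0 <= q -> q <= 1/2 -> \sum_(i < n) q ^+ i <= 2.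
Proof.
move=> q0 q1; elim: n => [|n IH]; first by rewrite big_ord0; lra.
rewrite big_ord_recl expr0.
under eq_bigr do rewrite exprS.
rewrite -mulr_sumr.
have S0 : 0 <= \sum_(i < n) q ^+ i by apply: sumr_ge0 => i _; exact: exprn_ge0.
nra.
Qed.

Lemma small_zero (x E rho : R) : 0 < rho -> 0 <= E ->
  (forall e, 0 < e -> e < rho -> x <= E * e) -> x <= 0.
Proof.
move=> r0 E0 h; apply/ler_addgt0Pr => eps eps0; rewrite add0r.
set w := eps / (E + 1).
have w0 : 0 < w by rewrite /w divr_gt0 //; lra.
have hw : eps = w * (E + 1) by rewrite /w divfK //; lra.
set e := Num.min (rho / 2) w.
have e0 : 0 < e by rewrite /e lt_min w0 andbT; lra.
have erho : e < rho by rewrite /e gt_min; apply/orP; left; lra.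
have ew : e <= w by rewrite /e ge_min lexx orbT.
have := h e e0 erho; nra.
Qed.

Lemma bounded_seq (u : nat -> R) : cvgn (series u) -> exists B, 0 <= B /\ forall n, `|u n| <= B.
Proof.
move=> /cvg_series_bounded hb.
case: hb => M0 [_ hM].
exists (`|M0| + 1); split; first by rewrite addr_ge0 // ?normr_ge0.
move=> n; have := hM (`|M0| + 1); apply => //.
rewrite (le_lt_trans (ler_norm M0)) // ltrDl //.
Qed.

Lemma step (a : nat -> R) (k : nat) (r T D : R) (H : R -> R) :
  0 < r -> 0 <= D ->
  (forall j, (j < k)%N -> a j = 0) ->
  (forall z, -r < z -> z < 0 ->
     series (fun j => a j * z ^ (j%:Z - k%:Z)) @ \oo --> H z) ->
  (forall z, -r < z -> z < 0 -> `|H z - T| <= D * (- z)) ->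
  a k = T.
Proof.
move=> r0 D0 hz hs hb.
set z0 := - (r / 2).
have z0r : -r < z0 by rewrite /z0; lra.
have z00 : z0 < 0 by rewrite /z0; lra.
have [B [B0 hB]] := bounded_seq _ (cvgP _ (hs z0 z0r z00)).
have key : forall z, z0 / 2 < z -> z < 0 -> `|H z - a k| <= 2 * B * (z / z0).
  move=> z hz1 hz2.
  set q := z / z0.
  have hq : z = q * z0 by rewrite /q divfK //; lra.
  have q0 : 0 <= q by nra.
  have q1 : q <= 1/2 by nra.
  have eq_term : forall j, (k <= j)%N ->
      a j * z ^ (j%:Z - k%:Z) = (a j * z0 ^ (j%:Z - k%:Z)) * q ^+ (j - k).
    by move=> j hj; rewrite subzn // -!exprnP hq exprMn; ring.
  have zr : -r < z by lra.
  have lim1 : (fun n => `|series (fun j => a j * z ^ (j%:Z - k%:Z)) n - a k|) @ \oo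
      --> `|H z - a k|.
    by apply: cvg_norm; apply: cvgB; [exact: hs | exact: cvg_cst].
  apply: (@closed_cvg _ _ _ _ _ _ (@closed_le _ (2 * B * q)) _ _ lim1).
  exists k.+1 => // n /= hn.
  rewrite /series /= (@big_cat_nat _ _ _ k) //=; last by lia.
  rewrite big1_seq ?add0r; last first.
    by move=> j; rewrite mem_index_iota => /andP[_ /andP[_ hj]]; rewrite hz // mul0r.
  rewrite big_ltn // subrr expr0z mulr1 addrC addrK.
  rewrite -{1}(add0n k.+1) big_addn.
  apply: (le_trans (ler_norm_sum _ _ _)).
  apply: (@le_trans _ _ (\sum_(0 <= i < n - k.+1) B * q ^+ i.+1)).
    apply: ler_sum => i _; rewrite eq_term; last by lia.
    rewrite normrM (ger0_norm (exprn_ge0 _ q0)).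
    have -> : ((i + k.+1) - k = i.+1)%N by lia.
    by apply: ler_wpM2r; [exact: exprn_ge0 | exact: hB].
  under eq_bigr do rewrite exprS mulrCA.
  rewrite -mulr_sumr -mulr_sumr big_mkord.
  have := geom_bound _ (n - k.+1) q0 q1.
  have S0 : 0 <= \sum_(i < n - k.+1) q ^+ i by apply: sumr_ge0 => i _; exact: exprn_ge0.
  move=> hS; have BQ : 0 <= B * q := mulr_ge0 B0 q0; nra.
have hx : `|a k - T| <= 0.
  apply: (@small_zero _ (4 * B / r + D) (r / 4)); first by lra.
    by rewrite addr_ge0 // divr_ge0 //; lra.
  move=> e e0 er.
  have he1 : z0 / 2 < - e by rewrite /z0; lra.
  have he2 : - e < 0 by lra.
  have := key _ he1 he2; have := hb (- e) ltac:(lra) he2.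
  have -> : 2 * B * (- e / z0) = 4 * B / r * e by rewrite /z0; field; lra.
  rewrite opprK => h1 h2.
  have := ler_distD (H (- e)) (a k) T.
  rewrite (distrC (a k) (H (- e))); lra.
by apply/eqP; rewrite -subr_eq0 -normr_le0.
Qed.

Lemma uniq_exp (a : nat -> R) (N : nat) (r A C : R) (G : R -> R) :
  0 < r -> 0 <= C ->
  (forall z, -r < z -> z < 0 ->
     series (fun j => a j * z ^ (j%:Z - N%:Z)) @ \oo --> G z) ->
  (forall z, -1 < z -> z < 0 -> `|G z - A| <= C * (- z)) ->
  (forall j, (j < N)%N -> a j = 0) /\ a N = A.
Proof.
move=> r0 C0 hs hb.
set r' := Num.min r 1.
have r'0 : 0 < r' by rewrite /r' lt_min r0 ltr01.
have hr1 : forall z, -r' < z -> -r < z /\ -1 < z.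
  by move=> z; rewrite /r' ltrNl lt_min => /andP[h1 h2]; split; lra.
have shifted : forall k, (k <= N)%N -> forall z, -r' < z -> z < 0 ->
    series (fun j => a j * z ^ (j%:Z - k%:Z)) @ \oo --> z ^+ (N - k) * G z.
  move=> k hk z hz1 hz2.
  have -> : (fun j => a j * z ^ (j%:Z - k%:Z)) =
            (fun j => z ^+ (N - k) * (a j * z ^ (j%:Z - N%:Z))).
    apply: funext => j; rewrite mulrCA; congr (_ * _).
    rewrite exprnP -exprzDr ?unitfE; last by rewrite lt_eqF.
    by congr (z ^ _); rewrite -subzn //; ring.
  have -> : series (fun j => z ^+ (N - k) * (a j * z ^ (j%:Z - N%:Z))) =
            (fun n => z ^+ (N - k) * series (fun j => a j * z ^ (j%:Z - N%:Z)) n).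
    by apply: funext => n; rewrite /series /= mulr_sumr.
  apply: cvgMl_tmp; apply: hs => //; have [] := hr1 z hz1; done.
have zeros : forall j, (j < N)%N -> a j = 0.
  elim/ltn_ind => j IH hj.
  apply: (@step a j r' 0 (`|A| + C) (fun z => z ^+ (N - j) * G z)) => //.
  - by rewrite addr_ge0.
  - by move=> i hi; apply: IH => //; lia.
  - by apply: shifted; lia.
  move=> z hz1 hz2; have [_ hz1'] := hr1 z hz1.
  rewrite subr0 normrM normrX ltr0_norm //.
  have hGA : `|G z| <= `|A| + C.
    have := hb z hz1' hz2; have := ler_normD A (G z - A); rewrite addrC subrK.
    move=> h1 h2; nra.
  have hpow : (- z) ^+ (N - j) <= - z.
    have -> : (N - j = (N - j).-1.+1)%N by lia.
    have h0 : 0 <= - z by lra.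
    have h1 : - z <= 1 by lra.
    rewrite exprS; have := exprn_ile1 (N - j).-1 h0 h1; nra.
  have hp0 : 0 <= (- z) ^+ (N - j) by apply: exprn_ge0; lra.
  have hG0 : 0 <= `|G z| by [].
  nra.
split => //.
apply: (@step a N r' A C (fun z => z ^+ (N - N) * G z)) => //.
- by apply: shifted.
move=> z hz1 hz2; have [_ hz1'] := hr1 z hz1.
by rewrite subnn expr0 mul1r; apply: hb.
Qed.
End Core.


Section Main.
Local Open Scope classical_set_scope.
Variable R : realType.

Definition lst (s m : seq nat) := seq.filter (valid s m) (subs (iota 1 (size m))).
Definition sR (s b I : seq nat) (t : R) : R :=
  \sum_(j < size s) ((nth 0%N I j)%:R + t) * (nth 0%N b j)%:R.

Lemma lst_uniq s m : uniq (lst s m).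
Proof. exact: filter_uniq (subs_uniq _ _). Qed.

Lemma lst_valid s m I : (0 < size s)%N -> (0 < last 0%N s)%N ->
  (I \in lst s m) = valid s m I.
Proof.
move=> hs hl; rewrite mem_filter; case E: (valid s m I) => //=.
by rewrite (valid_in _ _ _ hs hl E).
Qed.

Lemma Fcoef_eq s b m t z : (0 < size s)%N -> (0 < last 0%N s)%N ->
  @Fcoef R s b m t z = (\sum_(I <- lst s m) expR (z * sR s b I t))%:E.
Proof.
move=> hs hl; rewrite /Fcoef.
have -> : [set I | valid s m I] = [set` lst s m].
  by apply/seteqP; split => I /=; rewrite lst_valid.
rewrite esum_fset; last by move=> i _; rewrite lee_fin expR_ge0.
  by rewrite -fsbig_seq ?lst_uniq // sumEFin.
exact: finite_seq.
Qed.

Lemma sR_ge0 s b I t : 0 <= t -> 0 <= sR s b I t.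
Proof. by move=> t0; apply: sumr_ge0 => j _; apply: mulr_ge0 => //; apply: addr_ge0. Qed.

Lemma G_bound_gen (l : seq (seq nat)) (f : seq nat -> R) (z : R) :
  z < 0 -> (forall I, 0 <= f I) ->
  `|\sum_(I <- l) expR (z * f I) - (size l)%:R| <= (\sum_(I <- l) f I) * (- z).
Proof.
move=> z0 f0; elim: l => [|I l IH]; first by rewrite !big_nil subrr normr0 mul0r.
rewrite !big_cons /= -addn1 natrD.
have e1 : expR (z * f I) <= 1 by rewrite expR_le1; have := f0 I; nra.
have e2 := expR_ge1Dx (z * f I).
have -> : expR (z * f I) + \sum_(j <- l) expR (z * f j) - ((size l)%:R + 1) =
   (expR (z * f I) - 1) + (\sum_(j <- l) expR (z * f j) - (size l)%:R) by ring.
apply: (le_trans (ler_normD _ _)).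
have : `|expR (z * f I) - 1| <= f I * (- z) by rewrite ler_norml; nra.
lra.
Qed.


Lemma poly_zero_pos (p : {poly rat}) :
  (forall t : R, 0 <= t -> (map_poly ratr p).[t] = 0) -> p = 0.
Proof.
move=> h; apply/eqP; apply/negPn/negP => hp.
set q := map_poly (ratr : rat -> R) p.
have hq : q != 0 by rewrite /q map_poly_eq0.
set rs := [seq (i%:R : R) | i <- iota 0 (size q)].
have hall : all (root q) rs.
  by apply/allP => x /mapP[i _ ->]; rewrite /root h // ler0n.
have hu : uniq rs.
  rewrite map_inj_uniq ?iota_uniq // => i j hij.
  by apply/eqP; rewrite -(eqr_nat R) hij.
by have := max_poly_roots hq hall hu; rewrite size_map size_iota ltnn.
Qed.

Definition Spoly (s b I : seq nat) : {poly rat} :=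
  \sum_(j < size s) ((nth 0%N I j)%:R%:P + 'X) * ((nth 0%N b j)%:R)%:P.

Lemma Spoly_eval s b I t : (map_poly ratr (Spoly s b I)).[t] = sR s b I t.
Proof.
rewrite /Spoly rmorph_sum horner_sum; apply: eq_bigr => j _.
by rewrite rmorphM rmorphD /= !map_polyC map_polyX /= !ratr_nat hornerM hornerD hornerX !hornerC.
Qed.

Definition L0 s b := Laurent 0
  (fun m j => \sum_(I <- lst s m) (j`!%:R)^-1 *: (Spoly s b I) ^+ j).

Lemma cvg_big_list (l : seq (seq nat)) (f : seq nat -> nat -> R) (g : seq nat -> R) :
  (forall I, f I @ \oo --> g I) ->
  (fun n => \sum_(I <- l) f I n) @ \oo --> \sum_(I <- l) g I.
Proof.
move=> h; elim: l => [|I l IH].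
  rewrite big_nil; under eq_fun do rewrite big_nil; exact: cvg_cst.
rewrite big_cons; under eq_fun do rewrite big_cons.
exact: cvgD.
Qed.

Lemma L0_exp s b : (0 < size s)%N -> (0 < last 0%N s)%N -> is_expansion R s b (L0 s b).
Proof.
move=> hs hl m t t0; exists 1 => // z /andP[hz1 hz2].
exists (\sum_(I <- lst s m) expR (z * sR s b I t)); split; last by rewrite Fcoef_eq.
have -> : (fun j => (map_poly ratr (lcoef (L0 s b) m j)).[t] * z ^ (j%:Z - (lval (L0 s b))%:Z))
   = (fun j => \sum_(I <- lst s m) exp_coeff (z * sR s b I t) j).
  apply: funext => j /=.
  rewrite rmorph_sum horner_sum mulr_suml; apply: eq_bigr => I _.
  rewrite -mul_polyC rmorphM /= map_polyC hornerM hornerC rmorphXn /= horner_exp Spoly_eval exp_coeffE /=.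
  rewrite subr0 -exprnP fmorphV rmorph_nat exprMn; ring.
rewrite {1}/series /=.
under eq_fun do rewrite exchange_big /=.
apply: cvg_big_list => I.
exact: is_cvg_series_exp_coeff.
Qed.


Lemma L_good s b L : (0 < size s)%N -> (0 < last 0%N s)%N ->
  is_expansion R s b L -> Good L (fun m => (Mcoef s m)%:P).
Proof.
move=> hs hl hL.
have key : forall m (t : R), 0 <= t ->
   (forall j, (j < lval L)%N -> (map_poly ratr (lcoef L m j)).[t] = 0) /\
   (map_poly ratr (lcoef L m (lval L))).[t] = (size (lst s m))%:R.
  move=> m t t0; have [r r0 hr] := hL m t t0.
  apply: (@uniq_exp R _ (lval L) r _ (\sum_(I <- lst s m) sR s b I t)
            (fun z => \sum_(I <- lst s m) expR (z * sR s b I t))) => //.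
  - by apply: sumr_ge0 => I _; apply: sR_ge0.
  - move=> z hz1 hz2; have [l [hc hF]] := hr z ltac:(by apply/andP).
    by move: hF; rewrite Fcoef_eq // => -[->].
  - by move=> z _ hz2; apply: G_bound_gen => // I; apply: sR_ge0.
split.
  move=> m j hj; apply: poly_zero_pos => t t0; exact: ((key m t t0).1 j hj).
move=> m; apply/eqP; rewrite -subr_eq0; apply/eqP; apply: poly_zero_pos => t t0.
rewrite rmorphB /= hornerD hornerN (key m t t0).2 map_polyC hornerC /Mcoef.
by rewrite /lst size_filter; apply/eqP; rewrite subr_eq0 eq_sym; apply/eqP; apply: ratr_nat.
Qed.

Lemma phi_good s b : (0 < size s)%N -> (0 < last 0%N s)%N ->
  Good (phi R s b) (fun m => (Mcoef s m)%:P).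
Proof.
move=> hs hl; rewrite /phi; case: pselect => [h|nh].
  by case: cid => L hL /=; apply: (L_good s b L hs hl hL).
by exfalso; apply: nh; exists (L0 s b); apply: (L0_exp s b hs hl).
Qed.

End Main.

Theorem corollary4p5 (R : realType) (alpha beta : seq nat) :
  (0 < size alpha)%N -> (0 < last 0%N alpha)%N ->
  size beta = size alpha -> all (fun b => 0 < b)%N beta ->
  forall m : seq nat, Zcoef R alpha beta m = (Mcoef alpha m)%:P.
Proof.
move=> hs hl _ _ m.
exact: (final R (@phi_good R) alpha beta m hs hl).
Qed.
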